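(* For integers $n,m$, the inequality \[ 4\,\operatorname{arccosh}\!\left(\frac{\cos(\pi/m)}{\sin(\pi/n)}\right) > 2\log n \] holds whenever $n\ge4, m\ge8$; or $n\ge 6, m\ge 5$; or $n\ge 8, m\ge 4$; or $n\ge 12, m\ge 3$. *)

(* Defs.v *)
From Stdlib Require Import Reals.
Open Scope R_scope.

Definition arccosh (x : R) : R := ln (x + sqrt (x ^ 2 - 1)).

(* Main.v *)
Require Import Defs.
From Stdlib Require Import Reals.
From Stdlib Require Import Lra Lia Psatz.
Open Scope R_scope.

Lemma PI_le : PI <= 16/5.
Proof.
  destruct (Rle_lt_dec PI (16/5)) as [h|h]; [exact h|exfalso].
  assert (H := cos_bound (8/5) 1 ltac:(lra) ltac:(lra)).
  destruct H as [_ H].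
  assert (H0 := cos_ge_0 (8/5) ltac:(lra) ltac:(lra)).
  unfold cos_approx in H. cbn [sum_f_R0 Nat.add Nat.mul] in H. unfold cos_term in H.
  rewrite !INR_IZR_INZ in H.
  replace (Z.of_nat (Factorial.fact (2*4))) with 40320%Z in H by (vm_compute; reflexivity).
  replace (Z.of_nat (Factorial.fact (2*3))) with 720%Z in H by (vm_compute; reflexivity).
  replace (Z.of_nat (Factorial.fact (2*2))) with 24%Z in H by (vm_compute; reflexivity).
  replace (Z.of_nat (Factorial.fact (2*1))) with 2%Z in H by (vm_compute; reflexivity).
  replace (Z.of_nat (Factorial.fact (2*0))) with 1%Z in H by (vm_compute; reflexivity).
  simpl pow in H.
  lra.
Qed.

Lemma key (x s : R) : 0 < s -> 2*s*x > s*s+1 -> x + sqrt (x^2-1) > s.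
Proof.
  intros hs h.
  assert (hx : x >= 1). { destruct (Rlt_le_dec x 1) as [q|q]; [|lra]. assert (0 < s*(1-x)) by (apply Rmult_lt_0_compat; lra). assert (0 <= (s-1)*(s-1)) by apply Rle_0_sqr. nra. }
  destruct (Rle_lt_dec s x) as [h1|h1].
  - assert (0 < sqrt (x^2-1)).
    { apply sqrt_lt_R0. nra. }
    lra.
  - assert (sqrt ((s-x)*(s-x)) < sqrt (x^2-1)).
    { apply sqrt_lt_1_alt. split; nra. }
    rewrite sqrt_square in H by lra. lra.
Qed.

Lemma fin (n : nat) (X : R) : (4 <= n)%nat ->
  2 * sqrt (INR n) * X > INR n + 1 -> 4 * arccosh X > 2 * ln (INR n).
Proof.
  intros hn h.
  set (N := INR n) in *.
  assert (hN : 4 <= N) by (unfold N; replace 4 with (INR 4) by (simpl; lra); apply le_INR; lia).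
  set (s := sqrt N) in *.
  assert (hss : s * s = N) by (unfold s; apply sqrt_sqrt; lra).
  assert (hs1 : 0 < s) by (unfold s; apply sqrt_lt_R0; lra).
  rewrite <- hss in h.
  assert (hy := key X s hs1 h).
  unfold arccosh.
  assert (hl : ln s < ln (X + sqrt (X^2-1))) by (apply ln_increasing; lra).
  assert (hlN : ln N = 2 * ln s).
  { rewrite <- hss. rewrite ln_mult by lra. ring. }
  rewrite hlN. lra.
Qed.

Lemma INR_ge (n k : nat) : (k <= n)%nat -> INR k <= INR n.
Proof. apply le_INR. Qed.

Lemma core (n m : nat) (c0 s0 : R) :
  0 < c0 -> 0 < s0 -> (4 <= n)%nat -> (3 <= m)%nat ->
  c0 <= cos (PI / INR m) -> s0 * s0 <= INR n ->
  (forall s, s0 <= s -> 2*c0*(s*s*s) > 16/5*(s*s+1)) ->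
  4 * arccosh (cos (PI / INR m) / sin (PI / INR n)) > 2 * ln (INR n).
Proof.
  intros hc0 hs0 hn hm hc hs00 hpoly.
  apply fin; [exact hn|].
  assert (hPI := PI_le). assert (hP0 := PI_RGT_0).
  set (N := INR n) in *.
  assert (hN : 4 <= N) by (unfold N; replace 4 with (INR 4) by (simpl; lra); apply le_INR; lia).
  set (a := PI / N).
  assert (ha : 0 < a) by (unfold a; apply Rdiv_lt_0_compat; lra).
  assert (haN : a * N = PI) by (unfold a; field; lra).
  assert (haP : a < PI) by nra.
  assert (hsa : 0 < sin a) by (apply sin_gt_0; lra).
  assert (hsa2 : sin a < a) by (apply sin_lt_x; lra).
  set (X := cos (PI / INR m) / sin a).
  assert (hX : c0 / a <= X).
  { unfold X. unfold Rdiv. apply Rle_trans with (cos (PI / INR m) * / a).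
    - apply Rmult_le_compat_r; [apply Rlt_le, Rinv_0_lt_compat; lra | lra].
    - apply Rmult_le_compat_l; [lra|]. apply Rinv_le_contravar; lra. }
  set (s := sqrt N).
  assert (hss : s * s = N) by (unfold s; apply sqrt_sqrt; lra).
  assert (hs1 : 0 < s) by (unfold s; apply sqrt_lt_R0; lra).
  assert (hs : s0 <= s).
  { unfold s. rewrite <- (sqrt_square s0) by lra. apply sqrt_le_1; nra. }
  assert (hca : c0 / a * PI = c0 * N).
  { unfold a. field. split; lra. }
  assert (hp := hpoly s hs).
  rewrite <- hss.
  assert (2 * s * (c0 / a) * PI > (s*s+1) * PI).
  { replace (2 * s * (c0 / a) * PI) with (2*s*(c0/a*PI)) by ring.
    rewrite hca. rewrite <- hss. nra. }
  assert (2 * s * (c0 / a) > s*s+1) by nra.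
  nra.
Qed.

Lemma cosb (m : nat) (m0 : R) : 3 <= m0 -> m0 <= INR m ->
  1 - (16/5/m0)*(16/5/m0)/2 <= cos (PI / INR m).
Proof.
  intros h0 h1.
  assert (hPI := PI_le). assert (hP0 := PI_RGT_0).
  set (a := PI / INR m).
  assert (ha : 0 < a) by (unfold a; apply Rdiv_lt_0_compat; lra).
  assert (ha2 : a <= 16/5/m0).
  { unfold a. unfold Rdiv. apply Rmult_le_compat; try lra.
    - apply Rlt_le, Rinv_0_lt_compat; lra.
    - apply Rinv_le_contravar; lra. }
  assert (hm0 : 16/5/m0 <= 16/15).
  { assert (E : 16/5/m0 * m0 = 16/5) by (field; lra). set (q := 16/5/m0) in *.
    destruct (Rle_lt_dec q (16/15)) as [?|hq]; [lra|].
    assert (0 <= (q - 16/15) * (m0 - 3)) by (apply Rmult_le_pos; lra). nra. }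
  assert (hP32 := PI2_3_2).
  destruct (cos_bound a 0 ltac:(lra) ltac:(lra)) as [H _].
  unfold cos_approx in H. simpl in H. unfold cos_term in H. simpl in H.
  nra.
Qed.

Lemma cos_half (m : nat) : (3 <= m)%nat -> 1/2 <= cos (PI / INR m).
Proof.
  intros hm. assert (hP0 := PI_RGT_0).
  destruct (Nat.eq_dec m 3) as [->|h].
  - replace (INR 3) with 3 by (simpl; lra). rewrite cos_PI3. lra.
  - assert (h4 : 4 <= INR m) by (replace 4 with (INR 4) by (simpl; lra); apply le_INR; lia).
    assert (PI / INR m < PI / 3).
    { unfold Rdiv. apply Rmult_lt_compat_l; [lra|]. apply Rinv_lt_contravar; nra. }
    assert (0 < PI / INR m) by (apply Rdiv_lt_0_compat; lra).
    rewrite <- cos_PI3. left. apply cos_decreasing_1; lra.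
Qed.

Ltac polyt := let s := fresh "s" in let hs := fresh "hs" in intros s hs;
  lazymatch type of hs with ?s0 <= _ =>
  assert (0 <= (s - s0)) as H1 by lra;
  assert (0 <= (s - s0)*(s - s0)) as H2 by apply Rle_0_sqr;
  assert (0 <= (s - s0)*(s - s0)*(s - s0)) as H3 by (apply Rmult_le_pos; [apply H2|lra]);
  nra end.

Lemma INR_4le (n : nat) (r : R) (k : nat) : (k <= n)%nat -> r <= INR k -> r <= INR n.
Proof. intros h1 h2. apply Rle_trans with (INR k); [lra|apply le_INR; lia]. Qed.

Theorem proposition1 (n m : nat) :
  ((4 <= n)%nat /\ (8 <= m)%nat) \/ ((6 <= n)%nat /\ (5 <= m)%nat) \/
  ((8 <= n)%nat /\ (4 <= m)%nat) \/ ((12 <= n)%nat /\ (3 <= m)%nat) ->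
  4 * arccosh (cos (PI / INR m) / sin (PI / INR n)) > 2 * ln (INR n).
Proof.
  intros [[hn hm]|[[hn hm]|[[hn hm]|[hn hm]]]].
  - destruct (Nat.eq_dec n 4) as [->|hn5].
    + apply fin; [lia|].
      replace (INR 4) with 4 by (simpl; lra).
      replace (sqrt 4) with 2 by (replace 4 with (2*2) by lra; rewrite sqrt_square; lra).
      rewrite sin_PI4.
      assert (hc := cosb m 8 ltac:(lra) ltac:(apply (INR_4le m 8 8); [lia|simpl; lra])).
      assert (h2 : sqrt 2 * sqrt 2 = 2) by (apply sqrt_sqrt; lra).
      assert (h2p : 0 < sqrt 2) by (apply sqrt_lt_R0; lra).
      assert (E : cos (PI / INR m) / (1 / sqrt 2) = cos (PI / INR m) * sqrt 2) by (field; lra).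
      rewrite E.
      assert (1.4 <= sqrt 2) by nra.
      nra.
    + apply (core n m (23/25) (11/5)); try lra; try lia.
      * assert (hc := cosb m 8 ltac:(lra) ltac:(apply (INR_4le m 8 8); [lia|simpl; lra])). lra.
      * apply (INR_4le n _ 5); [lia|simpl; lra].
      * polyt.
  - apply (core n m (79/100) (61/25)); try lra; try lia.
    + assert (hc := cosb m 5 ltac:(lra) ltac:(apply (INR_4le m 5 5); [lia|simpl; lra])). lra.
    + apply (INR_4le n _ 6); [lia|simpl; lra].
    + polyt.
  - apply (core n m (17/25) (141/50)); try lra; try lia.
    + assert (hc := cosb m 4 ltac:(lra) ltac:(apply (INR_4le m 4 4); [lia|simpl; lra])). lra.
    + apply (INR_4le n _ 8); [lia|simpl; lra].
    + polyt.
  - destruct (Nat.eq_dec n 12) as [->|hn13].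
    + apply fin; [lia|].
      replace (INR 12) with 12 by (simpl; lra).
      assert (hc := cos_half m hm).
      assert (hP0 := PI_RGT_0).
      set (sn := sin (PI / 12)).
      assert (hsn : 0 < sn) by (apply sin_gt_0; lra).
      assert (E2 := cos_2a_sin (PI / 12)).
      replace (2 * (PI / 12)) with (PI / 6) in E2 by field.
      rewrite cos_PI6 in E2. fold sn in E2.
      assert (h3 : sqrt 3 * sqrt 3 = 3) by (apply sqrt_sqrt; lra).
      assert (h3p : 0 < sqrt 3) by (apply sqrt_lt_R0; lra).
      assert (h3l : 173/100 <= sqrt 3) by nra.
      set (s := sqrt 12).
      assert (hs : s * s = 12) by (apply sqrt_sqrt; lra).
      assert (hsp : 0 < s) by (apply sqrt_lt_R0; lra).
      assert (hsq : 12 > 169 * (sn * sn)) by nra.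
      assert (hlt : 13 * sn < s) by nra.
      assert (E : 2 * s * (cos (PI / INR m) / sn) = 2 * s * cos (PI / INR m) / sn) by (field; lra).
      rewrite E.
      apply Rlt_gt. apply Rlt_le_trans with (s / sn).
      * apply (Rmult_lt_reg_r sn); [lra|]. unfold Rdiv. rewrite Rmult_assoc, Rinv_l by lra. lra.
      * unfold Rdiv. apply Rmult_le_compat_r; [apply Rlt_le, Rinv_0_lt_compat; lra|]. nra.
    + apply (core n m (1/2) (18/5)); try lra; try lia.
      * apply cos_half; lia.
      * apply (INR_4le n _ 13); [lia|simpl; lra].
      * polyt.
Qed.
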